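(* Let $u,v$ be distinct points in the plane and $\gamma_1<\gamma_2$ angles such that the polar angle $\varphi(uv)$ of $\overrightarrow{uv}$ lies in $[\gamma_1,\gamma_2)$. Let $R=\overline{D(u,|uv|)\cap C_u(\gamma_1,\gamma_2)}$ (a closed sector with apex $u$ and with $v$ on its arc), and suppose $\alpha=\max\{\varphi(uv)-\gamma_1,\ \gamma_2-\varphi(uv)\}<\pi/3$. Then for every $w\in R\setminus\{u\}$, $$\frac{|uw|}{|uv|-|vw|}\leq\left(1-2\sin\frac{\alpha}{2}\right)^{-1}.$$
   Context: $D(a,\rho)$ is the open disk of center $a$ and radius $\rho$, and $\overline{X}$ denotes the closure of $X$. Polar angles are measured from the positive $x$-axis, modulo $2\pi$; $\varphi(uv)$ is the polar angle of the vector $\overrightarrow{uv}$. $C_u(\gamma_1,\gamma_2)$ is the set of points $w\neq u$ for which the polar angle of $\overrightarrow{uw}$ lies in $[\gamma_1,\gamma_2)$. *)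

(* Defs.v *)
From Stdlib Require Import Reals.
Open Scope R_scope.

Definition pt : Type := (R * R)%type.

Definition pdist (p q : pt) : R :=
  sqrt ((fst p - fst q) ^ 2 + (snd p - snd q) ^ 2).

(* theta is a representative (mod 2*pi) of the polar angle of the vector uw *)
Definition has_polar_angle (u w : pt) (theta : R) : Prop :=
  w <> u /\
  cos theta * pdist u w = fst w - fst u /\
  sin theta * pdist u w = snd w - snd u.

Definition pdisk (a : pt) (rho : R) (x : pt) : Prop := pdist a x < rho.

Definition cone (u : pt) (g1 g2 : R) (w : pt) : Prop :=
  w <> u /\ exists theta, g1 <= theta < g2 /\ has_polar_angle u w theta.

Definition pclosure (S : pt -> Prop) (x : pt) : Prop :=
  forall eps, 0 < eps -> exists y, S y /\ pdist x y < eps.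

(* Main.v *)
Require Import Defs.
From Stdlib Require Import Reals.
From Stdlib Require Import Lra Psatz.
Open Scope R_scope.

Definition nrm (x y : R) := sqrt (x ^ 2 + y ^ 2).

Lemma nrm_ge0 x y : 0 <= nrm x y.
Proof. apply sqrt_pos. Qed.

Lemma nrm_sq x y : nrm x y * nrm x y = x ^ 2 + y ^ 2.
Proof. unfold nrm; apply sqrt_sqrt; nra. Qed.

Lemma cs x1 x2 y1 y2 : x1*y1+x2*y2 <= nrm x1 x2 * nrm y1 y2.
Proof.
  destruct (Rle_dec (x1*y1+x2*y2) 0).
  - pose proof (nrm_ge0 x1 x2); pose proof (nrm_ge0 y1 y2); nra.
  - unfold nrm. rewrite <- sqrt_mult_alt by nra.
    rewrite <- (sqrt_pow2 (x1*y1+x2*y2)) by lra.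
    apply sqrt_le_1_alt. pose proof (pow2_ge_0 (x1*y2 - x2*y1)). nra.
Qed.

Lemma tri x1 x2 y1 y2 : nrm (x1+y1) (x2+y2) <= nrm x1 x2 + nrm y1 y2.
Proof.
  pose proof (nrm_ge0 x1 x2); pose proof (nrm_ge0 y1 y2).
  rewrite <- (sqrt_pow2 (nrm x1 x2 + nrm y1 y2)) by lra.
  unfold nrm at 1. apply sqrt_le_1_alt.
  pose proof (nrm_sq x1 x2); pose proof (nrm_sq y1 y2); pose proof (cs x1 x2 y1 y2).
  nra.
Qed.

Lemma pdist_nrm p q : pdist p q = nrm (fst p - fst q) (snd p - snd q).
Proof. reflexivity. Qed.

Lemma pdist_sym p q : pdist p q = pdist q p.
Proof. unfold pdist. f_equal. ring. Qed.

Lemma pdist_tri a b c : pdist a c <= pdist a b + pdist b c.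
Proof.
  rewrite !pdist_nrm.
  replace (fst a - fst c) with ((fst a - fst b) + (fst b - fst c)) by ring.
  replace (snd a - snd c) with ((snd a - snd b) + (snd b - snd c)) by ring.
  apply tri.
Qed.

Theorem corollary4 (u v : pt) (g1 g2 phi : R) :
  u <> v -> g1 < g2 ->
  g1 <= phi < g2 -> has_polar_angle u v phi ->
  Rmax (phi - g1) (g2 - phi) < PI / 3 ->
  forall w : pt,
    pclosure (fun x => pdisk u (pdist u v) x /\ cone u g1 g2 x) w ->
    w <> u ->
    pdist u w / (pdist u v - pdist v w)
      <= / (1 - 2 * sin (Rmax (phi - g1) (g2 - phi) / 2)).
Proof.
  intros Huv Hg Hphi [_ [Hc Hs]] Hal w Hcl Hwu.
  set (al := Rmax (phi - g1) (g2 - phi)) in *.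
  set (d := pdist u v) in *.
  assert (Hal0 : 0 <= al) by (unfold al; apply Rmax_case; lra).
  assert (Ha1 : phi - g1 <= al) by apply Rmax_l.
  assert (Ha2 : g2 - phi <= al) by apply Rmax_r.
  pose proof PI_RGT_0 as Hpi.
  set (s := sin (al / 2)).
  assert (Hs0 : 0 <= s) by (apply sin_ge_0; lra).
  assert (Hs1 : s < 1/2).
  { rewrite <- sin_PI6. apply sin_increasing_1; lra. }
  set (c := cos al).
  assert (Hcs : c = 1 - 2 * s * s).
  { unfold c, s. rewrite <- cos_2a_sin. f_equal. field. }
  assert (Hd0 : 0 <= d) by apply sqrt_pos.
  set (dot := fun x : pt => (fst x - fst u) * (fst v - fst u) + (snd x - snd u) * (snd v - snd u)).
  assert (HS : forall x, pdisk u d x /\ cone u g1 g2 x ->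
                pdist u x < d /\ dot x >= c * pdist u x * d).
  { intros x [Hx [_ [th [Hth [_ [Hc' Hs']]]]]]. split; [exact Hx|].
    unfold dot. rewrite pdist_sym in Hc', Hs'.
    rewrite <- Hc', <- Hs', <- Hc, <- Hs.
    replace (cos th * pdist x u * (cos phi * d) + sin th * pdist x u * (sin phi * d))
      with (pdist x u * d * cos (th - phi)) by (rewrite cos_minus; ring).
    rewrite (pdist_sym u x).
    assert (cos al <= cos (th - phi)).
    { destruct (Rle_dec 0 (th - phi)).
      - destruct (Req_dec (th - phi) al) as [E|E]; [rewrite E; lra|].
        left; apply cos_decreasing_1; lra.
      - rewrite <- (cos_neg (th - phi)).
        destruct (Req_dec (-(th - phi)) al) as [E|E]; [rewrite E; lra|].
        left; apply cos_decreasing_1; lra. }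
    assert (0 <= pdist x u) by apply sqrt_pos. unfold c.
    assert (0 <= pdist x u * d * (cos (th - phi) - cos al)).
    { apply Rmult_le_pos; [apply Rmult_le_pos|]; lra. }
    lra. }
  assert (Hc1 : c <= 1) by (unfold c; apply COS_bound).
  set (r := pdist u w).
  assert (Hr0 : 0 <= r) by apply sqrt_pos.
  assert (Hrd : r <= d).
  { destruct (Rle_dec r d) as [|Hn]; [assumption|].
    destruct (Hcl (r - d)) as [y [Hy Hwy]]; [lra|].
    destruct (HS y Hy) as [H1 _].
    pose proof (pdist_tri u y w) as T. rewrite (pdist_sym y w) in T. unfold r in *. lra. }
  assert (Hdot : dot w >= c * r * d).
  { destruct (Rge_dec (dot w) (c * r * d)) as [|Hn]; [assumption|].
    assert (Hdp : 0 < d).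
    { destruct Hd0 as [|E]; [assumption|]. rewrite <- E in Hn. unfold r in *.
      unfold dot in Hn. exfalso. apply Hn.
      assert (fst v - fst u = 0 /\ snd v - snd u = 0).
      { unfold d, pdist in E. symmetry in E. apply sqrt_eq_0 in E; [|nra]. nra. }
      destruct H. rewrite H, H0. lra. }
    set (e := (c * r * d - dot w) / (2 * d)).
    assert (He : 0 < e) by (unfold e; apply Rdiv_lt_0_compat; lra).
    destruct (Hcl e He) as [y [Hy Hwy]].
    destruct (HS y Hy) as [_ Hdy].
    pose proof (pdist_tri u y w) as T. rewrite (pdist_sym y w) in T.
    pose proof (cs (fst y - fst w) (snd y - snd w) (fst v - fst u) (snd v - snd u)) as CS.
    rewrite <- !pdist_nrm in CS. rewrite (pdist_sym y w), (pdist_sym v u) in CS. fold d in CS.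
    assert (dot y - dot w = (fst y - fst w) * (fst v - fst u) + (snd y - snd w) * (snd v - snd u))
      by (unfold dot; ring).
    assert (Hee : e * (2 * d) = c * r * d - dot w) by (unfold e; field; lra).
    assert (0 <= pdist u y) by apply sqrt_pos.
    assert (0 <= pdist w y) by apply sqrt_pos.
    fold r in T.
    assert (c * (r - pdist u y) * d <= pdist w y * d).
    { assert (0 <= c) by nra.
      apply Rmult_le_compat_r; [lra|].
        apply Rle_trans with (c * pdist w y); [apply Rmult_le_compat_l; lra|].
        nra. }
    assert (pdist w y * d < e * d) by (apply Rmult_lt_compat_r; lra).
    lra. }
  set (D := d - pdist v w).
  assert (Hkey : r * (1 - 2 * s) <= D).
  { assert (pdist v w <= d - r + 2 * r * s).
    { assert (0 <= d - r + 2 * r * s) by nra.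
      rewrite <- (sqrt_pow2 (d - r + 2 * r * s)) by assumption.
      unfold pdist. apply sqrt_le_1_alt.
      assert (Er : r * r = (fst u - fst w)^2 + (snd u - snd w)^2)
        by (unfold r; apply (nrm_sq (fst u - fst w) (snd u - snd w))).
      assert (Ed : d * d = (fst u - fst v)^2 + (snd u - snd v)^2)
        by (unfold d; apply (nrm_sq (fst u - fst v) (snd u - snd v))).
      unfold dot in Hdot.
      assert ((fst v - fst w) ^ 2 + (snd v - snd w) ^ 2 = d*d + r*r -
        2 * ((fst w - fst u) * (fst v - fst u) + (snd w - snd u) * (snd v - snd u)))
        by (rewrite Er, Ed; ring).
      rewrite H0. rewrite Hcs in Hdot.
      assert (0 <= r * s * (d - r) * (1 - s)).
      { apply Rmult_le_pos; [apply Rmult_le_pos; [apply Rmult_le_pos|]|]; lra. }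
      nra. }
    unfold D. lra. }
  assert (HK : 0 < 1 - 2 * s) by lra.
  assert (0 < / (1 - 2 * s)) by (apply Rinv_0_lt_compat; lra).
  fold r. fold D.
  destruct (Rlt_dec 0 D).
  - apply (Rmult_le_reg_r (D * (1 - 2 * s))); [nra|].
    replace (r / D * (D * (1 - 2 * s))) with (r * (1 - 2 * s)) by (field; lra).
    replace (/ (1 - 2 * s) * (D * (1 - 2 * s))) with D by (field; lra).
    assumption.
  - destruct (Req_dec D 0) as [E|E].
    + rewrite E. unfold Rdiv. rewrite Rinv_0. lra.
    + assert (/ D < 0) by (apply Rinv_lt_0_compat; lra).
      unfold Rdiv. nra.
Qed.
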